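(* Let $G$ be a graph on $n\ge1$ vertices. Then $D(G,k)$, as a function of the positive integer $k$, is given by a polynomial in $k$ (with rational coefficients) of degree $n$ and with constant term $0$. If $G$ has no non-trivial automorphisms, then $D(G,k)=k^n$; otherwise, the sum of the coefficients of this polynomial is $0$.
   Context: A $k$-labeling of $G$ is a map $\phi:V(G)\to\{1,\dots,k\}$; an automorphism $\pi$ preserves $\phi$ if $\phi(\pi(v))=\phi(v)$ for all $v$; $\phi$ is distinguishing if only the identity preserves it. Two distinguishing $k$-labelings $\phi,\phi'$ are equivalent if some automorphism $\pi$ satisfies $\phi'(\pi(v))=\phi(v)$ for all $v$; $D(G,k)$ is the number of equivalence classes of distinguishing $k$-labelings of $G$. *)

(* Defs.v *)
From HB Require Import structures.
From mathcomp Require Import all_boot all_order all_algebra all_fingroup.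
Set Implicit Arguments. Unset Strict Implicit. Unset Printing Implicit Defensive.

(* Graphs: a finite simple graph is a symmetric irreflexive relation adj on a
   finType T of vertices.  Labels {1,...,k} are represented by 'I_k = {0,...,k-1}. *)

Section DistLab.
Variables (T : finType) (adj : rel T).

Definition is_aut (s : {perm T}) : bool :=
  [forall x, forall y, adj (s x) (s y) == adj x y].

Definition preserves (k : nat) (s : {perm T}) (phi : {ffun T -> 'I_k}) : bool :=
  [forall v, phi (s v) == phi v].

Definition distinguishing (k : nat) (phi : {ffun T -> 'I_k}) : bool :=
  [forall s : {perm T}, (is_aut s && preserves s phi) ==> (s == 1%g)].

Definition lab_equiv (k : nat) (phi phi' : {ffun T -> 'I_k}) : bool :=
  [exists s : {perm T}, is_aut s && [forall v, phi' (s v) == phi v]].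

Definition lab_class (k : nat) (phi : {ffun T -> 'I_k}) : {set {ffun T -> 'I_k}} :=
  [set psi | distinguishing psi && lab_equiv phi psi].

Definition Dnum (k : nat) : nat :=
  #| [set lab_class phi | phi in [set phi : {ffun T -> 'I_k} | distinguishing phi]] |.

End DistLab.

(* Main.v *)
Require Import Defs.
From HB Require Import structures.
From mathcomp Require Import all_boot all_order all_algebra all_fingroup.
From mathcomp Require Import zify.
Import GRing.Theory Num.Theory.

Set Implicit Arguments. Unset Strict Implicit. Unset Printing Implicit Defensive.

Section Aux.
Variables (T : finType) (adj : rel T).
Local Open Scope group_scope.

Lemma is_aut1 : is_aut adj 1.
Proof. by apply/forallP=> x; apply/forallP=> y; rewrite !perm1. Qed.

Lemma is_autM s t : is_aut adj s -> is_aut adj t -> is_aut adj (s * t).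
Proof.
move=> /forallP hs /forallP ht; apply/forallP=> x; apply/forallP=> y.
rewrite !permM; move: (ht (s x)) => /forallP /(_ (s y)) /eqP ->.
exact: (forallP (hs x) y).
Qed.

Lemma is_autV s : is_aut adj s -> is_aut adj s^-1.
Proof.
move=> /forallP hs; apply/forallP=> x; apply/forallP=> y.
move: (hs (s^-1 x)) => /forallP /(_ (s^-1 y)) /eqP <-.
by rewrite !permKV.
Qed.

Definition eJ (J : {set {perm T}}) : rel T := fun x y => [exists s in J, s x == y].
Definition cJ (J : {set {perm T}}) : nat := #|roots (eJ J)|.

Lemma eJ_back J x y : eJ J x y -> connect (eJ J) y x.
Proof.
case/existsP=> s /andP[sJ /eqP <-].
have : fconnect s (s x) x.
  rewrite (fconnect_sym (@perm_inj _ s)); apply: connect1; by rewrite /= eqxx.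
apply: connect_sub => a b /eqP <-; apply: connect1; apply/existsP; exists s.
by rewrite sJ eqxx.
Qed.

Lemma eJ_sym J : connect_sym (eJ J).
Proof.
suff h : forall x y, connect (eJ J) x y -> connect (eJ J) y x.
  by move=> x y; apply/idP/idP; apply: h.
move=> x y cxy.
have cl : closed (eJ J) [pred z | connect (eJ J) z x].
  move=> a b eab; rewrite !inE; apply/idP/idP => h.
  - exact: connect_trans (eJ_back eab) h.
  - exact: connect_trans (connect1 eab) h.
by have := closed_connect cl cxy; rewrite !inE connect0 => <-.
Qed.

Lemma cJ_gt0 J : (0 < #|T|)%N -> (0 < cJ J)%N.
Proof.
case/card_gt0P=> x _; apply/card_gt0P; exists (fingraph.root (eJ J) x).
rewrite inE; exact: fingraph.roots_root (eJ_sym J) x.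
Qed.

Lemma cJ_le J : (cJ J <= #|T|)%N.
Proof. exact: max_card. Qed.

Lemma cJ_lt (J : {set {perm T}}) (s : {perm T}) : s \in J -> s != 1 -> (cJ J < #|T|)%N.
Proof.
move=> sJ s1.
have [x hx] : exists x, s x != x.
  case: (boolP [exists x, s x != x]) => [/existsP//|/existsPn h].
  move/negP: s1 => s1; exfalso; apply: s1; apply/eqP/permP=> x; rewrite perm1.
  by apply/eqP/negPn/h.
have e1 : connect (eJ J) x (s x).
  by apply: connect1; apply/existsP; exists s; rewrite sJ eqxx.
have hr : fingraph.root (eJ J) x = fingraph.root (eJ J) (s x) := elimT (fingraph.rootP (eJ_sym J)) e1.
have [y hy] : exists y, y \notin roots (eJ J).
  case: (boolP (x \in roots (eJ J))) => rx; last by exists x.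
  exists (s x); apply/negP; rewrite !inE => /eqP rsx.
  move: rx; rewrite inE => /eqP rx.
  by move/eqP: hx; apply; rewrite -rsx -hr rx.
have := cardC (roots (eJ J)).
have : (0 < #|[predC roots (eJ J)]|)%N by apply/card_gt0P; exists y; rewrite inE.
rewrite /cJ; lia.
Qed.

Lemma cJ0 : cJ set0 = #|T|.
Proof.
rewrite /cJ; apply: eq_card => x; rewrite !inE.
have cl : closed (eJ set0) (pred1 x).
  by move=> a b /existsP[s]; rewrite inE.
have := closed_connect cl (connect_root (eJ set0) x).
by rewrite !inE eqxx => /esym.
Qed.


Section Lab.
Variable k : nat.
Local Open Scope group_scope.

Definition Aset := [set s : {perm T} | is_aut adj s].

Lemma lab_equiv_refl (phi : {ffun T -> 'I_k}) : lab_equiv adj phi phi.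
Proof. apply/existsP; exists 1; rewrite is_aut1; apply/forallP=> v; by rewrite perm1. Qed.

Lemma lab_equiv_sym (phi psi : {ffun T -> 'I_k}) :
  lab_equiv adj phi psi -> lab_equiv adj psi phi.
Proof.
case/existsP=> s /andP[hs /forallP h]; apply/existsP; exists s^-1.
rewrite is_autV //; apply/forallP=> v.
by rewrite -{2}(permKV s v) (eqP (h _)).
Qed.

Lemma lab_equiv_trans (phi psi chi : {ffun T -> 'I_k}) :
  lab_equiv adj phi psi -> lab_equiv adj psi chi -> lab_equiv adj phi chi.
Proof.
case/existsP=> s /andP[hs /forallP h1]; case/existsP=> t /andP[ht /forallP h2].
apply/existsP; exists (s * t); rewrite is_autM //; apply/forallP=> v.
by rewrite permM (eqP (h2 _)) (eqP (h1 _)).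
Qed.

Definition relab (phi : {ffun T -> 'I_k}) (s : {perm T}) : {ffun T -> 'I_k} :=
  [ffun v => phi (s^-1 v)].

Lemma dist_relab phi s : is_aut adj s -> distinguishing adj phi ->
  distinguishing adj (relab phi s).
Proof.
move=> hs /forallP hd; apply/forallP=> t; apply/implyP=> /andP[ht /forallP hp].
have hu := hd (s * t * s^-1).
have : s * t * s^-1 == 1.
  apply: (implyP hu); rewrite !is_autM ?is_autV //=.
  apply/forallP=> w; rewrite !permM; have := hp (s w); by rewrite !ffunE permK.
move=> /eqP hu1; apply/eqP/permP=> x.
have := congr1 (fun f : {perm T} => f (s^-1 x)) hu1; rewrite /= !permM permKV !perm1.
by move/perm_inj.
Qed.

Lemma class_image phi : distinguishing adj phi ->
  [set psi in [set phi : {ffun T -> 'I_k} | distinguishing adj phi] | lab_equiv adj phi psi]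
   = relab phi @: Aset.
Proof.
move=> hd; apply/setP=> psi; rewrite !inE; apply/andP/imsetP.
- case=> _ /existsP[s /andP[hs /forallP h]]; exists s; first by rewrite inE.
  apply/ffunP=> v; rewrite ffunE -{1}(permKV s v); exact/eqP/(h _).
- case=> s; rewrite inE => hs ->; split; first exact: dist_relab.
  apply/existsP; exists s; rewrite hs; apply/forallP=> v; by rewrite ffunE permK.
Qed.

Lemma relab_inj phi : distinguishing adj phi -> {in Aset &, injective (relab phi)}.
Proof.
move=> /forallP hd s1 s2; rewrite !inE => h1 h2 heq.
have hu := hd (s2 * s1^-1).
have : s2 * s1^-1 == 1.
  apply: (implyP hu); rewrite is_autM ?is_autV //=.
  apply/forallP=> v; rewrite permM.
  have := congr1 (fun f : {ffun T -> 'I_k} => f (s2 v)) heq; rewrite /= !ffunE permK => ->.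
  done.
move/eqP/permP=> h; apply/permP=> x; move: (h x); rewrite permM perm1 => h'.
by rewrite -{1}h' permKV.
Qed.

Lemma Dnum_card :
  (Dnum adj k * #|Aset|)%N = #|[set phi : {ffun T -> 'I_k} | distinguishing adj phi]|.
Proof.
set D := [set phi : {ffun T -> 'I_k} | distinguishing adj phi].
have heq : {in D & &, equivalence_rel (@lab_equiv T adj k)}.
  move=> x y z _ _ _; split; first exact: lab_equiv_refl.
  move=> hxy; apply/idP/idP => h.
  - exact: lab_equiv_trans (lab_equiv_sym hxy) h.
  - exact: lab_equiv_trans hxy h.
have hP := equivalence_partitionP heq.
have -> : Dnum adj k = #|equivalence_partition (@lab_equiv T adj k) D|.
  rewrite /Dnum /equivalence_partition; apply: eq_card => X.
  by apply/imsetP/imsetP => -[phi hphi ->]; exists phi => //; apply/setP => psi;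
    rewrite /lab_class !inE.
rewrite (card_partition hP) -sum_nat_const; apply: eq_bigr => X.
case/imsetP=> phi; rewrite inE => hphi ->.
rewrite (class_image hphi) card_in_imset //; exact: relab_inj.
Qed.


Lemma count_inv (J : {set {perm T}}) :
  #|[set phi : {ffun T -> 'I_k} | [forall s in J, preserves s phi]]| = (k ^ cJ J)%N.
Proof.
set e := eJ J.
have sym := eJ_sym J.
pose R := {x : T | roots e x}.
pose rt (x : T) : R := exist _ (fingraph.root e x) (fingraph.roots_root sym x).
pose G (psi : {ffun R -> 'I_k}) : {ffun T -> 'I_k} := [ffun x => psi (rt x)].
have Ginj : injective G.
  move=> p1 p2 h; apply/ffunP=> r.
  have := congr1 (fun f : {ffun T -> 'I_k} => f (val r)) h; rewrite /= !ffunE.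
  have -> : rt (val r) = r by apply: val_inj; rewrite /= (eqP (valP r)).
  done.
have -> : [set phi : {ffun T -> 'I_k} | [forall s in J, preserves s phi]] = G @: setT.
  apply/setP=> phi; rewrite inE; apply/idP/imsetP.
  - move=> /forallP hphi.
    have hc : forall x y, connect e x y -> phi x = phi y.
      move=> x y cxy; have cl : closed e [pred z | phi z == phi x].
        move=> a b /existsP[s /andP[sJ /eqP <-]]; rewrite !inE.
        by rewrite (eqP (forallP (implyP (hphi s) sJ) a)).
      by have := closed_connect cl cxy; rewrite !inE eqxx => /esym/eqP ->.
    exists [ffun r : R => phi (val r)]; first by rewrite inE.
    apply/ffunP=> x; rewrite !ffunE /=; apply: hc; exact: connect_root.
  - case=> psi _ ->; apply/forallP=> s; apply/implyP=> sJ; apply/forallP=> v.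
    rewrite !ffunE.
    have -> : rt (s v) = rt v.
      apply: val_inj => /=; apply/esym/(fingraph.rootP sym); apply: connect1.
      by apply/existsP; exists s; rewrite sJ eqxx.
    done.
rewrite card_imset // cardsT card_ffun card_ord /cJ card_sig.
by apply: congr1; apply: eq_card => x; rewrite !inE.
Qed.

End Lab.

Section Incl.
Variable k : nat.
Local Open Scope ring_scope.

Definition Bset := [set s : {perm T} | is_aut adj s && (s != 1%g)].
Definition bad (s : {perm T}) (phi : {ffun T -> 'I_k}) :=
  [&& is_aut adj s, s != 1%g & preserves s phi].

Lemma dist_prod phi : ((distinguishing adj phi)%:R : rat) =
  \prod_(s : {perm T}) (- (bad s phi)%:R + 1).
Proof.
case: (boolP (distinguishing adj phi)) => hd.
- rewrite big1 // => s _.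
  have : ~~ bad s phi.
    apply/negP; rewrite /bad => /and3P[ha s1 hp].
    by move: (forallP hd s); rewrite ha hp /= (negbTE s1).
  by move/negbTE => ->; rewrite oppr0 add0r.
- move: hd => /forallPn [s]; rewrite negb_imply => /andP[/andP[ha hp] s1].
  by rewrite (bigD1 s) //= /bad ha hp s1 /= addNr mul0r.
Qed.

Lemma expand phi : \prod_(s : {perm T}) (- (bad s phi)%:R + 1) =
  \sum_(J : {set {perm T}}) (-1) ^+ #|J| * ([forall s in J, bad s phi])%:R :> rat.
Proof.
rewrite bigA_distr; apply: eq_bigr => J _.
rewrite -big_mkcond /= prodrN; congr (_ * _).
case: (boolP [forall s in J, bad s phi]) => h.
- rewrite big1 // => s sJ; by rewrite (implyP (forallP h s) sJ).
- case/forallPn: h => s; rewrite negb_imply => /andP[sJ hb].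
  by rewrite (bigD1 s) //= (negbTE hb) mul0r.
Qed.

Lemma sum_bool_card (X : finType) (P : pred X) :
  \sum_(x : X) ((P x)%:R : rat) = (#|[set x | P x]|)%:R.
Proof.
apply/esym; rewrite -sum1_card natr_sum big_mkcond /=; apply: eq_bigr => x _.
by rewrite inE; case: (P x).
Qed.

Lemma f_formula :
  (#|[set phi : {ffun T -> 'I_k} | distinguishing adj phi]|%:R : rat) =
  \sum_(J : {set {perm T}} | J \subset Bset) (-1) ^+ #|J| * ((k ^ cJ J)%N)%:R.
Proof.
rewrite -sum_bool_card.
under eq_bigr do rewrite dist_prod expand.
rewrite exchange_big /=. rewrite [LHS](bigID (fun J : {set {perm T}} => J \subset Bset)) /=.
rewrite [X in _ + X]big1 ?addr0.
- apply: eq_bigr => J hJ; rewrite -mulr_sumr; congr (_ * _).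
  rewrite sum_bool_card -count_inv; congr (_ %:R); apply: eq_card => phi.
  rewrite !inE; apply: eq_forallb => s; case sJ: (s \in J) => //=.
  by have := subsetP hJ s sJ; rewrite inE /bad => /andP[-> ->].
- move=> J /subsetPn[s sJ sB]; rewrite big1 // => phi _.
  suff -> : [forall s0 in J, bad s0 phi] = false by rewrite mulr0.
  apply/negbTE/forallPn; exists s; rewrite sJ /=.
  by apply: contra sB; rewrite inE /bad => /and3P[-> -> _].
Qed.

End Incl.
End Aux.

Local Open Scope ring_scope.

Theorem theorem13 (T : finType) (adj : rel T)
    (adj_sym : symmetric adj) (adj_irr : irreflexive adj)
    (n_ge1 : (0 < #|T|)%N) :
  exists p : {poly rat},
    [/\ size p = #|T|.+1,
        p`_0 = 0,
        (forall k : nat, (0 < k)%N -> p.[k%:R] = (Dnum adj k)%:R),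
        ((forall s : {perm T}, is_aut adj s -> s = 1%g) ->
           forall k : nat, (0 < k)%N -> Dnum adj k = (k ^ #|T|)%N)
      & ((exists s : {perm T}, is_aut adj s /\ s <> 1%g) ->
           \sum_(i < size p) p`_i = 0)].
Proof.
set n := #|T|.
set a := #|Aset adj|.
have a_gt0 : (0 < a)%N by apply/card_gt0P; exists 1%g; rewrite inE is_aut1.
have a0 : (a%:R : rat) != 0 by rewrite pnatr_eq0 -lt0n.
pose p : {poly rat} := (a%:R)^-1 *: \sum_(J : {set {perm T}} | J \subset Bset adj)
   ((-1) ^+ #|J| *: 'X^(cJ J)).
have coefp : forall i, p`_i = (a%:R)^-1 *
    \sum_(J : {set {perm T}} | J \subset Bset adj) (-1) ^+ #|J| * (i == cJ J)%:R.
  move=> i; rewrite coefZ coef_sum; congr (_ * _); apply: eq_bigr => J _.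
  by rewrite coefZ coefXn.
have evalp : forall k, p.[k%:R] = (Dnum adj k)%:R.
  move=> k; rewrite hornerZ horner_sum.
  have h := Dnum_card adj k.
  have -> : (Dnum adj k)%:R =
      (#|[set phi : {ffun T -> 'I_k} | distinguishing adj phi]|%:R : rat) / a%:R.
    by rewrite -h natrM mulfK.
  rewrite f_formula mulrC; congr (_ * _); apply: eq_bigr => J _.
  by rewrite hornerZ hornerXn natrX.
have coefn : p`_n = (a%:R)^-1.
  rewrite coefp (bigD1 set0) ?sub0set //= cards0 expr0 mul1r cJ0 eqxx big1 ?addr0 ?mulr1 //.
  move=> J /andP[hJ J0]; case/set0Pn: J0 => s sJ.
  have := subsetP hJ s sJ; rewrite inE => /andP[_ s1].
  by rewrite gtn_eqF ?mulr0 // (cJ_lt sJ s1).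
have coefbig : forall i, (n < i)%N -> p`_i = 0.
  move=> i hi; rewrite coefp big1 ?mulr0 // => J _.
  by rewrite gtn_eqF ?mulr0 // (leq_ltn_trans (cJ_le J) hi).
exists p; split.
- apply/eqP; rewrite eqn_leq; apply/andP; split.
  + by apply/leq_sizeP => j hj; apply: coefbig.
  + rewrite ltnNge; apply/negP => /leq_sizeP /(_ n (leqnn n)).
    by rewrite coefn; apply/eqP; rewrite invr_eq0.
- rewrite coefp big1 ?mulr0 // => J _.
  by rewrite eq_sym gtn_eqF ?mulr0 // cJ_gt0.
- by move=> k _; apply: evalp.
- move=> htriv k _.
  have hA : Aset adj = [set 1%g].
    apply/setP=> s; rewrite !inE; apply/idP/eqP => [/htriv //|->]; exact: is_aut1.
  have := Dnum_card adj k; rewrite hA cards1 muln1 => ->.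
  have -> : [set phi : {ffun T -> 'I_k} | distinguishing adj phi] = setT.
    apply/setP=> phi; rewrite !inE; apply/forallP=> s; apply/implyP => /andP[hs _].
    by rewrite (htriv s hs).
  by rewrite cardsT card_ffun card_ord.
- case=> s [hs s1].
  have -> : \sum_(i < size p) p`_i = p.[1].
    by rewrite horner_coef; apply: eq_bigr => i _; rewrite expr1n mulr1.
  have -> : (1 : rat) = 1%:R by [].
  rewrite evalp.
  have := Dnum_card adj 1; rewrite -/a.
  have -> : [set phi : {ffun T -> 'I_1} | distinguishing adj phi] = set0.
    apply/setP=> phi; rewrite !inE; apply/negP => /forallP /(_ s).
    rewrite hs /=.
    have -> : preserves s phi by apply/forallP => v; rewrite [phi (s v)]ord1 [phi v]ord1.
    move/eqP; exact: s1.
  rewrite cards0 => /eqP; rewrite muln_eq0 => /orP[/eqP -> // | /eqP ha].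
  by rewrite ha in a_gt0.
Qed.
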